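(* Let $k>d\ge1$ be integers, $G$ a finite abelian group, $A\subseteq G$, $\delta=|A|/|G|$, and let $F$ be any $(d+1)$-simple $k$-uniform hypergraph. Then $$\big|t(F,\Gamma^{(k)}_A)-\delta^{e(F)}\big|\le e(F)\,\|\Gamma^{(d+1)}_A-\delta\|_{\square^{d+1}_d}\le e(F)\,\|A-\delta\|_{U^{d+1}}.$$
   Context: $\Gamma^{(m)}_A:G^m\to\{0,1\}$ is $\Gamma^{(m)}_A(x_1,\dots,x_m)=A(x_1+\dots+x_m)$ (sets identified with indicator functions). For a $k$-uniform hypergraph $F$ whose edges are $k$-element subsets of $V(F)$, $t(F,\Gamma^{(k)}_A)=\mathbb{E}_{\mathbf{x}\in G^{V(F)}}\prod_{e\in E(F)}A(\sum_{v\in e}x_v)$. $F$ is $(d+1)$-simple if each edge $e$ contains a set of $d+1$ vertices not contained in any other edge. For $g:G^{d+1}\to\mathbb{R}$, $\|g\|_{\square^{d+1}_d}=\max|\mathbb{E}_{\mathbf{x}\in G^{d+1}}[g(\mathbf{x})\prod_{B\in\binom{[d+1]}{d}}S_B(\mathbf{x}_B)]|$ over subsets $S_B\subseteq G^B$. $\|f\|_{U^{m}}=\big(\mathbb{E}_{x,h_1,\dots,h_m}\prod_{\omega\in\{0,1\}^m}f(x+\sum_i\omega_ih_i)\big)^{1/2^m}$. *)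

(* Defs.v *)
From HB Require Import structures.
From mathcomp Require Import all_boot all_order all_algebra.
Set Implicit Arguments. Unset Strict Implicit. Unset Printing Implicit Defensive.
Import Order.TTheory GRing.Theory Num.Theory.
Local Open Scope ring_scope.

Definition avg (R : rcfType) (T : finType) (f : T -> R) : R :=
  (\sum_(x : T) f x) / #|T|%:R.

Definition ind (R : rcfType) (G : finZmodType) (A : {set G}) (g : G) : R :=
  (g \in A)%:R.

Definition density (R : rcfType) (G : finZmodType) (A : {set G}) : R :=
  #|A|%:R / #|G|%:R.

Definition Gamma (R : rcfType) (G : finZmodType) (m : nat) (A : {set G})
  (x : {ffun 'I_m -> G}) : R := ind R A (\sum_(i < m) x i).

Definition uniform (V : finType) (k : nat) (E : {set {set V}}) : Prop :=
  forall e, e \in E -> #|e| = k.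

Definition simple (V : finType) (s : nat) (E : {set {set V}}) : Prop :=
  forall e, e \in E -> exists S : {set V},
    [/\ S \subset e, #|S| = s &
        forall e', e' \in E -> e' != e -> ~~ (S \subset e')].

Definition hom_density (R : rcfType) (G : finZmodType) (V : finType)
  (E : {set {set V}}) (A : {set G}) : R :=
  avg (fun x : {ffun V -> G} => \prod_(e in E) ind R A (\sum_(v in e) x v)).

(* restriction x_B of x in G^(d+1) to B = [d+1] \ {j}, identified with G^d
   via lift j *)
Definition face (G : finZmodType) (d : nat) (j : 'I_d.+1)
  (x : {ffun 'I_d.+1 -> G}) : {ffun 'I_d -> G} := [ffun i => x (lift j i)].

(* ||g||_{square^{d+1}_d} : maximum over families (S_B)_{B in binom([d+1],d)},
   S_B subset of G^B, the d-subset B being indexed by its missing element j *)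
Definition box_norm (R : rcfType) (G : finZmodType) (d : nat)
  (g : {ffun 'I_d.+1 -> G} -> R) : R :=
  \big[Num.max/0]_(S : {ffun 'I_d.+1 -> {set {ffun 'I_d -> G}}})
     `| avg (fun x : {ffun 'I_d.+1 -> G} =>
              g x * \prod_(j < d.+1) (face j x \in S j)%:R) |.

(* ||f||_{U^m}: the 2^m-th root (m-fold iterated square root) of
   E_{x,h_1..h_m} prod_{w in {0,1}^m} f(x + sum_i w_i h_i) *)
Definition gowers_U (R : rcfType) (G : finZmodType) (m : nat) (f : G -> R) : R :=
  iter m Num.sqrt
    (avg (fun p : G * {ffun 'I_m -> G} =>
       \prod_(w : {ffun 'I_m -> bool})
          f (p.1 + \sum_(i < m) (if w i then p.2 i else 0)))).

(* Main.v *)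
Require Import Defs.
From HB Require Import structures.
From mathcomp Require Import all_boot all_order all_algebra ring lra.
Import Order.TTheory GRing.Theory Num.Theory.
Local Open Scope ring_scope.
Set Implicit Arguments. Unset Strict Implicit.

Section Avg.
Variable R : rcfType.

Lemma avg_ext (T : finType) (f g : T -> R) : (forall x, f x = g x) -> avg f = avg g.
Proof. by move=> fg; rewrite /avg; congr (_ / _); apply: eq_bigr => x _. Qed.

Lemma avg_const (T : finType) (x0 : T) (c : R) : avg (fun _ : T => c) = c.
Proof.
rewrite /avg sumr_const -[c *+ _]mulr_natr mulfK // pnatr_eq0 -lt0n.
by apply/card_gt0P; exists x0.
Qed.

Lemma avgD (T : finType) (f g : T -> R) : avg (fun x => f x + g x) = avg f + avg g.
Proof. by rewrite /avg big_split mulrDl. Qed.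

Lemma avgB (T : finType) (f g : T -> R) : avg (fun x => f x - g x) = avg f - avg g.
Proof. by rewrite /avg big_split sumrN mulrBl. Qed.

Lemma avgMl (T : finType) c (f : T -> R) : avg (fun x => c * f x) = c * avg f.
Proof. by rewrite /avg -mulr_sumr mulrA. Qed.

Lemma avg_le (T : finType) (f g : T -> R) : (forall x, f x <= g x) -> avg f <= avg g.
Proof.
move=> fg; rewrite /avg ler_wpM2r ?invr_ge0 ?ler0n //.
by apply: ler_sum => x _; exact: fg.
Qed.

Lemma avg_norm (T : finType) (f : T -> R) : `|avg f| <= avg (fun x => `|f x|).
Proof.
rewrite /avg normrM normfV normr_nat ler_wpM2r ?invr_ge0 ?ler0n //.
exact: ler_norm_sum.
Qed.

Lemma avg_exch (T1 T2 : finType) (F : T1 -> T2 -> R) :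
  avg (fun x => avg (fun y => F x y)) = avg (fun y => avg (fun x => F x y)).
Proof.
rewrite /avg -!mulr_suml exchange_big /= -!mulrA; congr (_ * _).
by rewrite mulrC.
Qed.

Lemma avg_bij (T : finType) (h : T -> T) (F : T -> R) :
  bijective h -> avg (fun x => F (h x)) = avg F.
Proof. by move=> bh; rewrite /avg [in RHS](reindex h) //; apply: onW_bij. Qed.

Lemma avg_pair (T1 T2 : finType) (F : T1 * T2 -> R) :
  avg F = avg (fun a => avg (fun b => F (a, b))).
Proof.
rewrite /avg -mulr_suml pair_big card_prod natrM invfM mulrA.
rewrite -mulrA [_^-1 * _]mulrC mulrA; congr (_ * _ * _).
by apply: eq_bigr => -[a b].
Qed.

Lemma avg_sq (T : finType) (f : T -> R) : avg f ^+ 2 <= avg (fun x => f x ^+ 2).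
Proof.
have [h|/card_gt0P [x0 _]] := posnP #|T|.
  rewrite /avg h invr0 !mulr0 expr0n //.
set c := avg f.
have : 0 <= avg (fun x => (f x - c) ^+ 2).
  rewrite /avg mulr_ge0 ?invr_ge0 ?ler0n //; apply: sumr_ge0 => x _; exact: sqr_ge0.
rewrite (@avg_ext _ _ (fun x => (f x ^+ 2 - (2 * c) * f x) + c ^+ 2)); last first.
  by move=> x; rewrite sqrrB; ring.
rewrite avgD avgB avgMl (avg_const x0) -/c.
move=> h; rewrite -subr_ge0; apply: le_trans h _; rewrite le_eqVlt; apply/orP; left.
apply/eqP; ring.
Qed.

Lemma avg_pow2 (T : finType) m (f : T -> R) :
  avg f ^+ (2 ^ m) <= avg (fun x => f x ^+ (2 ^ m)).
Proof.
elim: m f => [|m IH] f; first by rewrite expn0 !expr1 le_refl.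
rewrite (@avg_ext _ (fun x => f x ^+ (2 ^ m.+1)) (fun x => (f x ^+ 2) ^+ (2 ^ m))); last first.
  by move=> x; rewrite -exprM -expnS.
rewrite expnS exprM.
apply: le_trans (IH _).
apply: lerXn2r; rewrite ?nnegrE ?sqr_ge0 //; last exact: avg_sq.
by apply: le_trans (avg_sq f); exact: sqr_ge0.
Qed.

End Avg.
Section Part2.
Variable R : rcfType.
Variable G : finZmodType.

Definition dlt n (j : 'I_n) (a : G) : {ffun 'I_n -> G} :=
  [ffun i => if i == j then a else 0].

Lemma dltD n (j : 'I_n) a b : dlt j (a + b) = dlt j a + dlt j b.
Proof. by apply/ffunP => i; rewrite !ffunE; case: eqP; rewrite ?addr0. Qed.

Lemma dltN n (j : 'I_n) a : dlt j (- a) = - dlt j a.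
Proof. by apply/ffunP => i; rewrite !ffunE; case: eqP; rewrite ?oppr0. Qed.

Lemma sum_ffunD n (x y : {ffun 'I_n -> G}) :
  \sum_i (x + y) i = \sum_i x i + \sum_i y i.
Proof. by rewrite -big_split; apply: eq_bigr => i _; rewrite ffunE. Qed.

Lemma sum_dlt n (j : 'I_n) a : \sum_i dlt j a i = a.
Proof.
rewrite (bigD1 j) //= ffunE eqxx big1 ?addr0 // => i /negbTE ij.
by rewrite ffunE ij.
Qed.

Definition indep n (j : 'I_n) (u : {ffun 'I_n -> G} -> R) :=
  forall y a, u (y + dlt j a) = u y.

Lemma avg_shiftY n (F : {ffun 'I_n -> G} -> R) (z : {ffun 'I_n -> G}) :
  avg (fun y : {ffun 'I_n -> G} => F (y + z)) = avg F.
Proof. by apply: avg_bij; exists (fun y => y - z) => y; rewrite ?addrK ?subrK. Qed.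

Lemma avg_shiftG (F : G -> R) (z : G) : avg (fun y : G => F (y + z)) = avg F.
Proof. by apply: avg_bij; exists (fun y => y - z) => y; rewrite ?addrK ?subrK. Qed.


Lemma avg_mul (T1 T2 : finType) (f : T1 -> R) (g : T2 -> R) :
  avg f * avg g = avg (fun a => avg (fun b => f a * g b)).
Proof.
rewrite mulrC -avgMl; apply: avg_ext => a; by rewrite mulrC -avgMl.
Qed.

Fixpoint Nrec m (f : G -> R) : R :=
  if m is m'.+1 then avg (fun h : G => Nrec m' (fun x => f x * f (x + h)))
  else avg f.

Lemma avg_sumY n (f : G -> R) :
  avg (fun y : {ffun 'I_n.+1 -> G} => f (\sum_i y i)) = avg f.
Proof.
transitivity (avg (fun a : G => avg (fun y : {ffun 'I_n.+1 -> G} =>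
   f (\sum_i (y + dlt ord0 a) i)))).
  rewrite (avg_ext (g := fun a : G => avg (fun y : {ffun 'I_n.+1 -> G} => f (\sum_i y i)))).
    by symmetry; apply: (avg_const 0).
  by move=> a; rewrite (avg_shiftY (fun y => f (\sum_i y i))).
rewrite avg_exch.
rewrite (avg_ext (g := fun y : {ffun 'I_n.+1 -> G} => avg f)); first by apply: (avg_const (0 : {ffun 'I_n.+1 -> G})).
move=> y /=; rewrite -(avg_shiftG f (\sum_i y i)); apply: avg_ext => a.
by rewrite sum_ffunD sum_dlt addrC.
Qed.

Variable d : nat.

Lemma Qlem m : (m <= d.+1)%N -> forall (f : G -> R)
  (u : 'I_d.+1 -> {ffun 'I_d.+1 -> G} -> R),
  (forall j : 'I_d.+1, (j < m)%N -> (forall y, `|u j y| <= 1) /\ indep j (u j)) ->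
  avg (fun y : {ffun 'I_d.+1 -> G} =>
     f (\sum_i y i) * \prod_(j : 'I_d.+1 | (j < m)%N) u j y) ^+ (2 ^ m) <= Nrec m f.
Proof.
elim: m => [|m IH] hm f u hu.
  rewrite expn0 expr1 /=.
  rewrite (avg_ext (g := fun y : {ffun 'I_d.+1 -> G} => f (\sum_i y i))) ?avg_sumY //.
  by move=> y; rewrite [\prod_(_ | _) _]big_pred0 ?mulr1 // => j; rewrite ltn0.
pose jm : 'I_d.+1 := Ordinal hm.
have hm' : (m <= d.+1)%N by apply: ltnW.
pose F := fun y : {ffun 'I_d.+1 -> G} => f (\sum_i y i) * \prod_(j : 'I_d.+1 | (j < m)%N) u j y.
have [ub ui] := hu jm (ltnSn m).
have E1 : avg (fun y : {ffun 'I_d.+1 -> G} =>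
     f (\sum_i y i) * \prod_(j : 'I_d.+1 | (j < m.+1)%N) u j y) =
   avg (fun y : {ffun 'I_d.+1 -> G} => u jm y * F y).
  apply: avg_ext => y; rewrite [\prod_(_ | _) _](bigD1 jm) //= /F mulrCA; congr (_ * (_ * _)).
  apply: eq_bigl => j; rewrite -val_eqE /= ltnS leq_eqVlt.
  by case: ltngtP.
pose M := fun y : {ffun 'I_d.+1 -> G} => avg (fun a : G => F (y + dlt jm a)).
have E2 : avg (fun y : {ffun 'I_d.+1 -> G} => u jm y * F y) = avg (fun y : {ffun 'I_d.+1 -> G} => u jm y * M y).
  transitivity (avg (fun a : G => avg (fun y : {ffun 'I_d.+1 -> G} => u jm (y + dlt jm a) * F (y + dlt jm a)))).
    rewrite (avg_ext (g := fun a : G => avg (fun y : {ffun 'I_d.+1 -> G} => u jm y * F y))).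
      by symmetry; apply: (avg_const 0).
    by move=> a; rewrite (avg_shiftY (fun y : {ffun 'I_d.+1 -> G} => u jm y * F y)).
  rewrite avg_exch; apply: avg_ext => y; rewrite /M -avgMl; apply: avg_ext => a.
  by rewrite ui.
pose X := fun h : G => avg (fun y : {ffun 'I_d.+1 -> G} => F y * F (y + dlt jm h)).
have E3 : avg (fun y : {ffun 'I_d.+1 -> G} => M y ^+ 2) = avg X.
  rewrite (avg_ext (g := fun y : {ffun 'I_d.+1 -> G} => avg (fun a : G => avg (fun b : G =>
       F (y + dlt jm a) * F (y + dlt jm b))))); last first.
    by move=> y; rewrite expr2 avg_mul.
  rewrite avg_exch.
  rewrite (avg_ext (g := fun a : G => avg X)); first by apply: (avg_const (0 : G)).
  move=> a; rewrite avg_exch.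
  rewrite -(avg_shiftG X (- a)); apply: avg_ext => b.
  rewrite /X -[RHS](avg_shiftY _ (dlt jm a)); apply: avg_ext => y.
  by rewrite -addrA -dltD addrCA subrr addr0.
have E4 : forall h, X h = avg (fun y : {ffun 'I_d.+1 -> G} =>
    (fun x => f x * f (x + h)) (\sum_i y i) *
    \prod_(j : 'I_d.+1 | (j < m)%N) (fun j y => u j y * u j (y + dlt jm h)) j y).
  move=> h; apply: avg_ext => y /=; rewrite /F sum_ffunD sum_dlt big_split /=.
  by rewrite -!mulrA; congr (_ * _); rewrite mulrCA.
rewrite E1 E2 expnS exprM.
have H1 : avg (fun y : {ffun 'I_d.+1 -> G} => u jm y * M y) ^+ 2 <= avg X.
  rewrite -E3; apply: le_trans (avg_sq _) _; apply: avg_le => y.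
  rewrite exprMn; apply: ler_piMl; first exact: sqr_ge0.
  by rewrite -real_normK ?num_real // exprn_ile1 ?normr_ge0.
apply: le_trans (_ : avg X ^+ (2 ^ m) <= _).
  apply: lerXn2r; rewrite ?nnegrE ?sqr_ge0 //.
  exact: le_trans (sqr_ge0 _) H1.
apply: le_trans (avg_pow2 _ _) _ => /=.
apply: avg_le => h; rewrite E4; apply: IH => // j jm'.
have [ub' ui'] := hu j (ltnW jm').
split.
  move=> y; rewrite normrM; apply: mulr_ile1; rewrite ?normr_ge0 //.
move=> y a; rewrite ui' addrAC ui'. done.
Qed.

End Part2.

Section Cube.
Variable R : rcfType.

Definition fcons (T : finType) m (a : T) (h : {ffun 'I_m -> T}) : {ffun 'I_m.+1 -> T} :=
  [ffun i => if unlift ord0 i is Some j then h j else a].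

Lemma fcons0 (T : finType) m (a : T) (h : {ffun 'I_m -> T}) : fcons a h ord0 = a.
Proof. by rewrite ffunE unlift_none. Qed.

Lemma fconsS (T : finType) m (a : T) (h : {ffun 'I_m -> T}) j : fcons a h (lift ord0 j) = h j.
Proof. by rewrite ffunE liftK. Qed.

Lemma big_fcons (S : Type) (idx : S) (op : Monoid.com_law idx) (T : finType) m
  (F : {ffun 'I_m.+1 -> T} -> S) :
  \big[op/idx]_H F H = \big[op/idx]_a \big[op/idx]_h F (fcons a h).
Proof.
rewrite pair_big /= (reindex (fun p : T * {ffun 'I_m -> T} => fcons p.1 p.2)) /=.
  by apply: eq_bigr => -[a h].
apply: onW_bij; exists (fun H : {ffun 'I_m.+1 -> T} => (H ord0, [ffun j => H (lift ord0 j)])).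
  move=> [a h] /=; rewrite fcons0; congr (_, _); apply/ffunP => j.
  by rewrite ffunE fconsS.
move=> H; apply/ffunP => i; rewrite ffunE /=.
by case: unliftP => [j ->|->]; rewrite ?ffunE.
Qed.

Lemma avg_fcons (T : finType) m (F : {ffun 'I_m.+1 -> T} -> R) :
  avg F = avg (fun a => avg (fun h => F (fcons a h))).
Proof.
rewrite -(avg_pair (fun p : T * {ffun 'I_m -> T} => F (fcons p.1 p.2))).
rewrite /avg big_fcons pair_big card_prod !card_ffun !card_ord expnS.
by congr (_ / _); apply: eq_bigr => -[a h].
Qed.

Variable G : finZmodType.

Lemma cube m (f : G -> R) : Nrec m f =
  avg (fun p : G * {ffun 'I_m -> G} => \prod_(w : {ffun 'I_m -> bool})
     f (p.1 + \sum_(i < m) (if w i then p.2 i else 0))).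
Proof.
elim: m f => [|m IH] f /=.
  rewrite avg_pair; apply: avg_ext => x; symmetry.
  rewrite (avg_ext (g := fun _ => f x)); first by apply: (avg_const [ffun i => 0]).
  move=> h /=; under eq_bigr do rewrite big_ord0 addr0.
  by rewrite prodr_const card_ffun card_ord card_bool expn0 expr1.
rewrite (avg_ext (g := fun h : G => avg (fun p : G * {ffun 'I_m -> G} =>
     \prod_(w : {ffun 'I_m -> bool})
     (f (p.1 + \sum_(i < m) (if w i then p.2 i else 0)) *
      f (p.1 + \sum_(i < m) (if w i then p.2 i else 0) + h))))); last first.
  by move=> h; rewrite IH.
rewrite avg_exch [LHS]avg_pair [RHS]avg_pair; apply: avg_ext => x.
rewrite avg_fcons avg_exch; apply: avg_ext => a; apply: avg_ext => h /=.
rewrite big_fcons big_bool /= big_split /= mulrC; congr (_ * _); apply: eq_bigr => w _.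
  rewrite big_ord_recl !fcons0; under [X in _ = f (_ + (_ + X))]eq_bigr do rewrite !fconsS.
  by rewrite [a + _]addrC addrA.
rewrite big_ord_recl !fcons0 /= add0r.
by under [X in _ = f (_ + X)]eq_bigr do rewrite !fconsS.
Qed.

End Cube.

Section Part2b.
Variable R : rcfType.
Variable G : finZmodType.

Lemma iter_sqrt n (B N : R) : 0 <= B -> B ^+ (2 ^ n) <= N -> B <= iter n Num.sqrt N.
Proof.
elim: n B => [|n IH] B hB h; first by move: h; rewrite expn0 expr1.
rewrite iterS.
have h2 : B ^+ 2 <= iter n Num.sqrt N.
  by apply: IH; [exact: sqr_ge0 | rewrite -exprM -expnS].
rewrite -(ger0_norm hB) -sqrtr_sqr ler_sqrt //.
exact: le_trans (sqr_ge0 _) h2.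
Qed.

Lemma face_indep d (j : 'I_d.+1) (S : {set {ffun 'I_d -> G}}) :
  indep j (fun y : {ffun 'I_d.+1 -> G} => ((face j y \in S)%:R : R)).
Proof.
move=> y a; congr ((_ \in S)%:R); apply/ffunP => i.
by rewrite !ffunE lift_eqF addr0.
Qed.

Lemma box_le_U d (f : G -> R) :
  box_norm (fun y : {ffun 'I_d.+1 -> G} => f (\sum_i y i)) <= gowers_U d.+1 f.
Proof.
have U0 : 0 <= gowers_U d.+1 f by rewrite /gowers_U iterS sqrtr_ge0.
rewrite /box_norm; apply: (big_ind (fun v => v <= gowers_U d.+1 f)) => //.
  by move=> x y hx hy; rewrite ge_max hx hy.
move=> S _.
set B := avg _.
apply: iter_sqrt; first exact: normr_ge0.
rewrite -cube expnS exprM real_normK ?num_real // -exprM -expnS.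
have := @Qlem R G d d.+1 (leqnn _) f (fun j y => ((face j y \in S j)%:R : R)).
have -> : B = avg (fun y : {ffun 'I_d.+1 -> G} =>
     f (\sum_i y i) * \prod_(j : 'I_d.+1 | (j < d.+1)%N) (face j y \in S j)%:R).
  apply: avg_ext => y; congr (_ * _); apply: eq_bigl => j; by rewrite ltn_ord.
apply => j _; split; last exact: face_indep.
by move=> y; rewrite normr_nat lern1 leq_b1.
Qed.

End Part2b.

Section Part1.
Variable R : rcfType.
Variable G : finZmodType.
Variable V : finType.
Variable d : nat.
Variable A : {set G}.

Local Notation Y := {ffun 'I_d.+1 -> G}.
Local Notation X := {ffun V -> G}.
Local Notation dl := (density R A).
Local Notation beta := (box_norm (fun y : Y => Gamma R A y - density R A)).
Lemma avg_shiftX (F : X -> R) (z : X) :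
  avg (fun y : X => F (y + z)) = avg F.
Proof. by apply: avg_bij; exists (fun y => y - z) => y; rewrite ?addrK ?subrK. Qed.

Definition ae (e : {set V}) (x : X) : R := ind R A (\sum_(v in e) x v).

Lemma le_bigmax_seq (T : eqType) (s : seq T) (F : T -> R) t :
  t \in s -> F t <= \big[Num.max/0]_(i <- s) F i.
Proof.
elim: s => // i s IH; rewrite inE big_cons => /orP [/eqP ->|/IH h].
  by rewrite le_max lexx.
by rewrite le_max h orbT.
Qed.

Lemma le_bigmax_fin (T : finType) (F : T -> R) t :
  F t <= \big[Num.max/0]_(i : T) F i.
Proof. by apply: le_bigmax_seq; exact: mem_index_enum. Qed.

Lemma beta_ge (S : {ffun 'I_d.+1 -> {set {ffun 'I_d -> G}}}) :
  `| avg (fun y : Y => (Gamma R A y - dl) * \prod_(j < d.+1) (face j y \in S j)%:R) |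
   <= beta.
Proof. exact: (le_bigmax_fin (fun S : {ffun 'I_d.+1 -> {set {ffun 'I_d -> G}}} => _) S). Qed.

Definition unface (J : 'I_d.+1) (t : {ffun 'I_d -> G}) : Y :=
  [ffun i => if unlift J i is Some k then t k else 0].

Lemma unface_face J (y : Y) : unface J (face J y) = y + dlt J (- y J).
Proof.
apply/ffunP => i; rewrite !ffunE.
case: unliftP => [k ->|->]; rewrite ?ffunE ?lift_eqF ?addr0 //.
by rewrite eqxx subrr.
Qed.

Lemma prod01 (I : finType) (P : pred I) (b : I -> bool) :
  let w := \prod_(i | P i) ((b i)%:R : R) in w = (w == 1)%:R.
Proof.
move=> w; have : (w == 0) || (w == 1).
  rewrite /w; apply: (big_ind (fun v : R => (v == 0) || (v == 1))).
  - by rewrite eqxx orbT.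
  - by move=> x y /orP [] /eqP -> /orP [] /eqP ->; rewrite ?mulr0 ?mul0r ?mulr1 eqxx ?orbT.
  - by move=> i _; case: (b i); rewrite eqxx ?orbT.
by case/orP => /eqP ->; rewrite ?eqxx // eq_sym oner_eq0.
Qed.

Lemma wface (J : 'I_d.+1) (w : Y -> R) :
  indep J w -> (forall y, w y = (w y == 1)%:R) ->
  forall y, w y = (face J y \in [set t | w (unface J t) == 1])%:R.
Proof.
by move=> hi h01 y; rewrite inE unface_face hi -h01.
Qed.


Section Key.
Variable sigma : 'I_d.+1 -> V.

Definition iota (z : Y) : X := [ffun v => \sum_(j | sigma j == v) z j].

Lemma sum_iota (e : {set V}) z : \sum_(v in e) iota z v = \sum_(j | sigma j \in e) z j.
Proof.
rewrite [RHS](partition_big sigma (fun v => v \in e)) //=.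
apply: eq_bigr => v hv; rewrite ffunE; apply: eq_bigl => j.
by case: eqP => [->|]; rewrite ?hv ?andbF.
Qed.

Lemma iotaD z z' : iota (z + z') = iota z + iota z'.
Proof. by apply/ffunP => v; rewrite !ffunE -big_split; apply: eq_bigr => j _; rewrite ffunE. Qed.

Lemma sum_xD (e : {set V}) (x w : X) : \sum_(v in e) (x + w) v = \sum_(v in e) x v + \sum_(v in e) w v.
Proof. by rewrite -big_split; apply: eq_bigr => v _; rewrite ffunE. Qed.

Lemma key (e : {set V}) (E' : {set {set V}}) :
  (forall j, sigma j \in e) -> (forall e', e' \in E' -> exists j, sigma j \notin e') ->
  `| avg (fun x : X => (ae e x - dl) * \prod_(e' in E') ae e' x) | <= beta.
Proof.
move=> he hE.
set H := fun x : X => (ae e x - dl) * \prod_(e' in E') ae e' x.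
have -> : avg H = avg (fun x : X => avg (fun y : Y => H (x + iota y))).
  rewrite -avg_exch.
  rewrite (avg_ext (g := fun y : Y => avg H)); first by symmetry; apply: (avg_const (0 : Y)).
  by move=> y; rewrite (avg_shiftX H).
apply: le_trans (avg_norm _) _.
apply: le_trans (_ : avg (fun _ : X => beta) <= _); last by rewrite (avg_const (0 : X)).
apply: avg_le => x.
pose c := \sum_(v in e) x v.
rewrite -(avg_shiftY (fun y => H (x + iota y)) (dlt ord0 (- c))).
pose jf := fun e' : {set V} => odflt ord0 [pick j | sigma j \notin e'].
have jfP : forall e', e' \in E' -> sigma (jf e') \notin e'.
  move=> e' he'; rewrite /jf; case: pickP => [j hj|h] //=.
  by have [j hj] := hE e' he'; move: (h j); rewrite hj.
pose w := fun J (y : Y) => \prod_(e' in E' | jf e' == J) ae e' (x + iota (y + dlt ord0 (- c))).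
pose S := [ffun J => [set t | w J (unface J t) == 1]].
have wS : forall J y, w J y = (face J y \in S J)%:R.
  move=> J; rewrite ffunE; apply: wface.
    move=> y b; apply: eq_bigr => e' /andP [he' /eqP hj]; rewrite /ae; congr ind.
    rewrite [y + dlt J b + _]addrAC (iotaD _ (dlt J b)) addrA [LHS]sum_xD.
    have -> : \sum_(v in e') iota (dlt J b) v = 0.
      rewrite sum_iota big1 // => j hj'.
      rewrite ffunE; case: eqP => // ejJ; exfalso.
      by move: (jfP e' he'); rewrite hj -ejJ hj'.
    by rewrite addr0.
  move=> y; exact: prod01.
apply: le_trans (beta_ge S); rewrite le_eqVlt; apply/orP; left; apply/eqP.
congr `| _ |; apply: avg_ext => y; rewrite /H; congr (_ * _).
  congr (_ - _); rewrite /ae /Gamma sum_xD sum_iota.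
  rewrite [\sum_(j | sigma j \in e) _](eq_bigl (fun _ => true)); last by move=> j; rewrite he.
  by rewrite sum_ffunD sum_dlt -/c addrCA subrr addr0.
rewrite (partition_big jf predT) //=; apply: eq_bigr => J _.
by rewrite -wS.
Qed.

End Key.

Lemma dl_ge0 : 0 <= dl.
Proof. by rewrite /density divr_ge0 ?ler0n. Qed.

Lemma dl_le1 : dl <= 1.
Proof.
rewrite /density ler_pdivrMr ?mul1r ?ler_nat ?max_card //.
by rewrite ltr0n; apply/card_gt0P; exists 0.
Qed.

Lemma tele (E : {set {set V}}) :
  (forall (e : {set V}) (E' : {set {set V}}), e \in E -> E' \subset E -> e \notin E' ->
     `|avg (fun x : X => (ae e x - dl) * \prod_(e' in E') ae e' x)| <= beta) ->
  forall n (E' : {set {set V}}), #|E'| = n -> E' \subset E ->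
  `|hom_density R E' A - dl ^+ n| <= n%:R * beta.
Proof.
move=> hkey; elim => [|n IH] E' hc hsub.
  rewrite (cards0_eq hc) /hom_density (avg_ext (g := fun _ => 1)).
    by rewrite (avg_const (0 : X)) expr0 subrr normr0 mul0r.
  by move=> x; rewrite big_set0.
have [e he] : exists e, e \in E' by apply/card_gt0P; rewrite hc.
have hc' : #|E' :\ e| = n by move: hc; rewrite (cardsD1 e) he add1n; case.
have hsub' : E' :\ e \subset E by apply: subset_trans (subsetDl E' [set e]) hsub.
have he0 : e \notin E' :\ e by rewrite !inE eqxx.
have h1 := hkey e (E' :\ e) (subsetP hsub e he) hsub' he0.
have h2 := IH (E' :\ e) hc' hsub'.
rewrite /hom_density (avg_ext (g := fun x => (ae e x - dl) * \prod_(e' in E' :\ e) ae e' x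
   + dl * \prod_(e' in E' :\ e) ae e' x)); last first.
  by move=> x; rewrite (big_setD1 e he) /= mulrBl subrK.
rewrite avgD avgMl exprS -addrA -mulrBr.
apply: le_trans (ler_normD _ _) _.
rewrite [X in _ + X]normrM (ger0_norm dl_ge0) -addn1 natrD mulrDl mul1r addrC.
apply: lerD; last exact: h1.
apply: le_trans h2; apply: ler_piMl; [exact: normr_ge0 | exact: dl_le1].
Qed.

End Part1.

Theorem mainTheorem5 (R : rcfType) (G : finZmodType) (k d : nat)
  (V : finType) (E : {set {set V}}) (A : {set G}) :
  (1 <= d)%N -> (d < k)%N -> uniform k E -> simple d.+1 E ->
  `| hom_density R E A - density R A ^+ #|E| |
     <= #|E|%:R * box_norm (fun x : {ffun 'I_d.+1 -> G} => Gamma R A x - density R A)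
  /\ #|E|%:R * box_norm (fun x : {ffun 'I_d.+1 -> G} => Gamma R A x - density R A)
     <= #|E|%:R * gowers_U d.+1 (fun g : G => ind R A g - density R A).
Proof.
move=> hd hk hu hs; split; last first.
  apply: ler_wpM2l; first exact: ler0n.
  exact: (box_le_U d (fun g : G => ind R A g - density R A)).
apply: (@tele R G V d A E _ #|E| E erefl (subxx E)) => e E' he hsub heE'.
have [S [hSe hS hSo]] := hs e he.
pose sigma := fun j : 'I_d.+1 => enum_val (cast_ord (esym hS) j).
apply: (@key R G V d A sigma e E').
  by move=> j; apply: (subsetP hSe); exact: enum_valP.
move=> e' he'.
have he'E : e' \in E by apply: (subsetP hsub).
have ne : e' != e by apply/eqP => h; move: heE'; rewrite -h he'.
have /subsetPn [v hv hv'] := hSo e' he'E ne.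
exists (cast_ord hS (enum_rank_in hv v)).
by rewrite /sigma cast_ordK enum_rankK_in.
Qed.
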